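(* Let $\sigma\in\Sigma$ satisfy, for all contests $c\in\mathcal{C}$, candidates $i\in\mathcal{N}_c$ and integers $n\in\mathbb{N}$: $\sigma^n(i)\in\mathcal{N}_c$ if and only if $\sigma^n(i)=i$. Then there exist $B\in\mathbb{N}$ and a deck $\beta_1,\ldots,\beta_B\in\mathscr{B}$ such that $T^*_i(\beta_1,\ldots,\beta_B)\ge1$ for all $i\in\mathcal{N}$; $T^*_i(\beta_1,\ldots,\beta_B)\neq T^*_j(\beta_1,\ldots,\beta_B)$ for all $c\in\mathcal{C}$ and distinct $i,j\in\mathcal{N}_c$; and $T^\sigma(\beta_1,\ldots,\beta_B)=T^*(\beta_1,\ldots,\beta_B)$.
   Context: A ballot style consists of contests $\mathcal{C}=\{1,\ldots,C\}$, candidates $\mathcal{N}=\{1,\ldots,N\}$ partitioned into nonempty sets $\mathcal{N}_c$ ($c\in\mathcal{C}$), and positive integers $v_c$. A filled-out ballot is a subset $\beta\subseteq\mathcal{N}$; $\mathscr{B}=\{\beta\subseteq\mathcal{N}: |\mathcal{N}_c\cap\beta|\le v_c\ \forall c\}$. For $i\in\mathcal{N}_c$: $T^*_i(\beta_1,\ldots,\beta_B)=\sum_{b=1}^B\mathbb{I}\{i\in\beta_b\text{ and }|\mathcal{N}_c\cap\beta_b|\le v_c\}$, and for a bijection $\sigma$ of $\mathcal{N}$, $T^\sigma_i(\beta_1,\ldots,\beta_B)=\sum_{b=1}^B\mathbb{I}\{\sigma(i)\in\beta_b\text{ and }|\{\sigma(j)\in\beta_b: j\in\mathcal{N}_c\}|\le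 v_c\}$. $\Sigma$ is the set of non-identity bijections $\mathcal{N}\to\mathcal{N}$. $\sigma^n$ denotes the $n$-fold composition of $\sigma$. *)

(* Defs.v *)
(* Ballot style: candidates 'I_N, contests 'I_C,
   contest : 'I_N -> 'I_C gives the partition (N_c = contest^-1 c),
   v : 'I_C -> nat the vote limits. A deck is a seq of ballots. *)
From mathcomp Require Import all_boot all_fingroup.
Set Implicit Arguments. Unset Strict Implicit. Unset Printing Implicit Defensive.

Definition valid_ballot (N C : nat) (contest : 'I_N -> 'I_C) (v : 'I_C -> nat)
  (beta : {set 'I_N}) : bool :=
  [forall c : 'I_C, #|[set j in beta | contest j == c]| <= v c].

Definition Tstar (N C : nat) (contest : 'I_N -> 'I_C) (v : 'I_C -> nat)
  (deck : seq {set 'I_N}) (i : 'I_N) : nat :=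
  count (fun beta : {set 'I_N} => (i \in beta) &&
          (#|[set j in beta | contest j == contest i]| <= v (contest i))) deck.

Definition Tsigma (N C : nat) (contest : 'I_N -> 'I_C) (v : 'I_C -> nat)
  (sigma : {perm 'I_N}) (deck : seq {set 'I_N}) (i : 'I_N) : nat :=
  count (fun beta : {set 'I_N} => (sigma i \in beta) &&
          (#|[set j : 'I_N | (contest j == contest i) && (sigma j \in beta)]|
             <= v (contest i))) deck.

(* Main.v *)
Require Import Defs.
From mathcomp Require Import all_boot all_fingroup.

Lemma count_deck N (m : 'I_N -> nat) (a : pred {set 'I_N}) (x0 : 'I_N)
  (ha : forall k, a [set k] = (k == x0)) (s : seq 'I_N) :
  uniq s ->
  count a (flatten [seq nseq (m k) [set k] | k <- s]) = if x0 \in s then m x0 else 0.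
Proof.
elim: s => [|k s IH] //= /andP [ks us].
rewrite count_cat count_nseq ha IH // in_cons.
case: (eqVneq k x0) => [Hk|Hk] /=.
  by subst k; rewrite (negbTE ks) mul1n addn0.
by rewrite mul0n.
Qed.

Theorem theorem4 (N C : nat) (contest : 'I_N -> 'I_C) (v : 'I_C -> nat)
  (contest_nonempty : forall c : 'I_C, exists i : 'I_N, contest i = c)
  (v_pos : forall c : 'I_C, 0 < v c)
  (sigma : {perm 'I_N}) (sigma_nonid : sigma != 1%g)
  (hsig : forall (i : 'I_N) (n : nat),
      contest ((sigma ^+ n)%g i) = contest i <-> (sigma ^+ n)%g i = i) :
  exists deck : seq {set 'I_N},
    all (valid_ballot contest v) deck /\
    (forall i : 'I_N, 1 <= Tstar contest v deck i) /\
    (forall i j : 'I_N, contest i = contest j -> i != j ->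
        Tstar contest v deck i != Tstar contest v deck j) /\
    (forall i : 'I_N, Tsigma contest v sigma deck i = Tstar contest v deck i).
Proof.
pose m (k : 'I_N) := (enum_rank (porbit sigma k)).+1.
pose deck := flatten [seq nseq (m k) [set k] | k <- enum 'I_N].
have card1 : forall (k : 'I_N) (P : pred 'I_N), #|[set j in [set k] | P j]| <= 1.
  move=> k P; rewrite -(cards1 k); apply: subset_leq_card.
  by apply/subsetP => j; rewrite inE => /andP [].
have Tst : forall i, Tstar contest v deck i = m i.
  move=> i; rewrite /Tstar (@count_deck _ _ _ i) ?enum_uniq ?mem_enum //.
  move=> k; rewrite inE eq_sym; case: eqP => //= ->.
  exact: leq_trans (card1 _ _) (v_pos _).
exists deck; split.
  apply/allP => b /flattenP [s /mapP [k _ ->]] /nseqP [-> _].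
  apply/forallP => c; exact: leq_trans (card1 _ _) (v_pos _).
split; first by move=> i; rewrite Tst.
split.
  move=> i j hc hij; rewrite !Tst; apply/negP => /eqP [] /ord_inj /enum_rank_inj hp.
  have : j \in porbit sigma i by rewrite hp porbit_id.
  move/porbitP => [n hn].
  have := hsig i n; rewrite -hn hc => [[h _]].
  by move: hij; rewrite (h erefl) eqxx.
move=> i; rewrite Tst /Tsigma (@count_deck _ _ _ (sigma i)) ?enum_uniq ?mem_enum.
  by rewrite /m -(expg1 sigma) porbit_perm.
move=> k; rewrite inE; case: (eqVneq k (sigma i)) => //= ->.
apply: leq_trans _ (v_pos _); rewrite -(cards1 i); apply: subset_leq_card.
apply/subsetP => j; rewrite !inE => /andP [_ /eqP] /perm_inj ->; rewrite eqxx.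
all: by [].
Qed.
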